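(* Let $I\subseteq[0,\infty)$ be an interval, let $f:I\to\mathbb{R}$ be twice differentiable on $I^\circ$, and let $a,b\in I^\circ$ with $a<b$ such that $f''\in L^1[a,b]$. Let $q>1$, $p=\frac{q}{q-1}$, and assume $|f''|^q$ is quasi-convex on $[a,b]$. If $M=\sup_{x\in(a,b)}|f''(x)|<\infty$, then $$\left|\frac{f(a)+f(b)}{2}-\frac{1}{b-a}\int_a^b f(x)\,dx\right|\le \frac{(b-a)^2}{2^{1+\frac1q}}\,M\,\bigl(\beta(2,p+1)\bigr)^{\frac1p}.$$
   Context: A function $g:[a,b]\to\mathbb{R}$ is quasi-convex on $[a,b]$ if $g(\lambda x+(1-\lambda)y)\le\max\{g(x),g(y)\}$ for all $x,y\in[a,b]$ and $\lambda\in[0,1]$. $\beta(x,y)=\int_0^1 t^{x-1}(1-t)^{y-1}\,dt$ for $x,y>0$. *)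

(* Defs.v *)
From Stdlib Require Import Reals Lra ClassicalEpsilon.
Open Scope R_scope.

(* Real power x^y with the convention 0^y = 0 (used only for y > 0). *)
Definition rpow (x y : R) : R :=
  if Rlt_dec 0 x then Rpower x y else 0.

Definition is_interval (I : R -> Prop) : Prop :=
  forall x y z, I x -> I z -> x <= y -> y <= z -> I y.

Definition int_pt (I : R -> Prop) (x : R) : Prop :=
  exists eps, 0 < eps /\ forall y, Rabs (y - x) < eps -> I y.

Definition quasi_convex_on (g : R -> R) (a b : R) : Prop :=
  forall x y lam, a <= x <= b -> a <= y <= b -> 0 <= lam <= 1 ->
    g (lam * x + (1 - lam) * y) <= Rmax (g x) (g y).

(* Beta function beta(x,y) = int_0^1 t^(x-1) (1-t)^(y-1) dt,
   as the value of the Riemann integral (when it exists). *)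
Definition beta_integrand (x y : R) (t : R) : R :=
  rpow t (x - 1) * rpow (1 - t) (y - 1).

Definition beta (x y : R) : R :=
  epsilon (inhabits 0)
    (fun l => exists pr : Riemann_integrable (beta_integrand x y) 0 1,
              RiemannInt pr = l).

(* Main.v *)
Require Import Defs.
From Stdlib Require Import Reals Lra ClassicalEpsilon.
From Coquelicot Require Import Coquelicot.
Open Scope R_scope.

Lemma exp_le_mono x y : x <= y -> exp x <= exp y.
Proof. intros [H|H]; [left; apply exp_increasing; auto | subst; lra]. Qed.

Lemma rpow_pos_eq x r : 0 < x -> rpow x r = Rpower x r.
Proof. intros H; unfold rpow; destruct (Rlt_dec 0 x); [auto|lra]. Qed.

Lemma rpow_nonpos x r : x <= 0 -> rpow x r = 0.
Proof. intros H; unfold rpow; destruct (Rlt_dec 0 x); [lra|auto]. Qed.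

Lemma Rpower_pos x r : 0 < Rpower x r.
Proof. unfold Rpower; apply exp_pos. Qed.

Lemma Rpower_one_base r : Rpower 1 r = 1.
Proof. unfold Rpower; rewrite ln_1, Rmult_0_r; apply exp_0. Qed.

Lemma rpow_small r eps : 0 < r -> 0 < eps -> forall h,
  Rabs h < Rpower eps (1/r) -> Rabs (rpow h r) < eps.
Proof.
  intros Hr He h Hh. destruct (Rlt_dec 0 h) as [Hp|Hn].
  - rewrite rpow_pos_eq by auto. rewrite Rabs_pos_eq by (left; apply Rpower_pos).
    rewrite Rabs_pos_eq in Hh by lra.
    apply Rlt_le_trans with (Rpower (Rpower eps (1/r)) r).
    + apply Rlt_Rpower_l; auto.
    + rewrite Rpower_mult. replace (1/r*r) with 1 by (field; lra).
      rewrite Rpower_1; auto; lra.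
  - rewrite rpow_nonpos by lra. rewrite Rabs_R0; auto.
Qed.

Lemma rpow_cont r u : 0 < r -> 0 <= u -> continuity_pt (fun u => rpow u r) u.
Proof.
  intros Hr [Hu|Hu].
  - apply continuity_pt_locally_ext with (a := u) (f := fun x => Rpower x r).
    + auto.
    + intros y Hy. unfold Rdist in Hy. rewrite rpow_pos_eq; auto.
      apply Rabs_def2 in Hy; lra.
    + apply derivable_continuous_pt. exists (r * Rpower u (r-1)).
      apply derivable_pt_lim_power; auto.
  - subst u. intros eps He. exists (Rpower eps (1/r)). split; [apply Rpower_pos|].
    intros x [_ Hx]. unfold R_dist in *. rewrite (rpow_nonpos 0) by lra.
    simpl in *. unfold R_dist in *. rewrite Rminus_0_r in *. apply rpow_small; auto.
Qed.

Lemma rpow_der r u : 1 < r -> 0 <= u ->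
  derivable_pt_lim (fun u => rpow u r) u (r * rpow u (r-1)).
Proof.
  intros Hr [Hu|Hu].
  - rewrite rpow_pos_eq by auto. apply is_derive_Reals.
    apply is_derive_ext_loc with (f := fun x => Rpower x r).
    + assert (Hp : 0 < u/2) by lra. exists (mkposreal _ Hp).
      intros t Ht. simpl in Ht. unfold ball in Ht; simpl in Ht; unfold AbsRing_ball in Ht.
      simpl in Ht. unfold abs, minus, plus, opp in Ht; simpl in Ht.
      rewrite rpow_pos_eq; auto. apply Rabs_def2 in Ht; lra.
    + apply is_derive_Reals, derivable_pt_lim_power; auto.
  - subst u. rewrite (rpow_nonpos 0) by lra. rewrite Rmult_0_r.
    intros eps He. assert (Hd : 0 < Rpower eps (1/(r-1))) by apply Rpower_pos.
    exists (mkposreal _ Hd). intros h Hh0 Hh. simpl in Hh.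
    rewrite Rplus_0_l, (rpow_nonpos 0) by lra. rewrite Rminus_0_r, Rminus_0_r.
    destruct (Rlt_dec 0 h) as [Hp|Hn].
    + rewrite rpow_pos_eq by auto.
      replace r with ((r-1)+1) at 1 by ring. rewrite Rpower_plus, Rpower_1 by auto.
      replace (Rpower h (r - 1) * h / h) with (rpow h (r-1)).
      * apply rpow_small; auto; lra.
      * rewrite rpow_pos_eq by auto. field; lra.
    + rewrite rpow_nonpos by lra. unfold Rdiv; rewrite Rmult_0_l, Rabs_R0; auto.
Qed.

Lemma rpow1m_der r t : 1 < r -> t <= 1 ->
  derivable_pt_lim (fun t => rpow (1-t) r) t (- (r * rpow (1-t) (r-1))).
Proof.
  intros Hr Ht.
  change (fun t => rpow (1-t) r) with (comp (fun u => rpow u r) (fun t => 1-t)).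
  replace (- (r * rpow (1-t) (r-1))) with ((r * rpow (1-t) (r-1)) * -1) by ring.
  apply derivable_pt_lim_comp.
  - apply is_derive_Reals. auto_derive; try ring; auto.
  - apply rpow_der; lra.
Qed.

Lemma rpow1m_cont r t : 0 < r -> t <= 1 -> continuity_pt (fun t => rpow (1-t) r) t.
Proof.
  intros Hr Ht.
  change (fun t => rpow (1-t) r) with (comp (fun u => rpow u r) (fun t => 1-t)).
  apply continuity_pt_comp.
  - apply derivable_continuous_pt. exists (-1). apply is_derive_Reals. auto_derive; try ring; auto.
  - apply rpow_cont; lra.
Qed.

Lemma beta_int p (Hp : 0 < p) :
  is_RInt (beta_integrand 2 (p+1)) 0 1 (/ ((p+1)*(p+2))).
Proof.
  pose (FF := fun t => (-(/(p+1))) * rpow (1-t) (p+1) + / (p+2) * rpow (1-t) (p+2)).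
  pose (dff := fun t => rpow (1-t) p - rpow (1-t) (p+1)).
  assert (HD : forall t, t <= 1 -> derivable_pt_lim FF t (dff t)).
  { intros t Ht.
    assert (H := derivable_pt_lim_plus _ _ t _ _
      (derivable_pt_lim_scal _ (-(/(p+1))) t _ (rpow1m_der (p+1) t ltac:(lra) Ht))
      (derivable_pt_lim_scal _ (/(p+2)) t _ (rpow1m_der (p+2) t ltac:(lra) Ht))).
    replace (p+1-1) with p in H by ring. replace (p+2-1) with (p+1) in H by ring.
    replace (dff t) with (-(/(p+1)) * - ((p + 1) * rpow (1 - t) p) +
            / (p + 2) * - ((p + 2) * rpow (1 - t) (p + 1))).
    exact H. unfold dff. field. lra. }
  assert (HR : is_RInt dff 0 1 (minus (FF 1) (FF 0))).
  { apply (is_RInt_derive (V:=R_CompleteNormedModule) FF dff).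
    - intros x Hx. rewrite Rmin_left, Rmax_right in Hx by lra.
      apply is_derive_Reals, HD; lra.
    - intros x Hx. rewrite Rmin_left, Rmax_right in Hx by lra.
      apply continuity_pt_filterlim. unfold dff.
      apply continuity_pt_minus; apply rpow1m_cont; lra. }
  assert (HV : minus (FF 1) (FF 0) = / ((p+1)*(p+2))).
  { change (minus (FF 1) (FF 0)) with (FF 1 - FF 0). unfold FF.
    rewrite Rminus_diag, Rminus_0_r, !rpow_nonpos by lra.
    rewrite !rpow_pos_eq by lra. rewrite !Rpower_one_base. change (@eq R (- / (p + 1) * 0 + / (p + 2) * 0 - (- / (p + 1) * 1 + / (p + 2) * 1)) (/ ((p + 1) * (p + 2)))). field; lra. }
  rewrite HV in HR.
  apply is_RInt_ext with dff; auto.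
  rewrite Rmin_left, Rmax_right by lra. intros x Hx. change (@eq R (dff x) (beta_integrand 2 (p+1) x)).
  unfold dff, beta_integrand. rewrite !rpow_pos_eq by lra.
  replace (2-1) with 1 by ring. replace (p+1-1) with p by ring.
  rewrite Rpower_1 by lra. rewrite Rpower_plus, Rpower_1 by lra. ring.
Qed.

Lemma beta_val p (Hp : 0 < p) : beta 2 (p+1) = / ((p+1)*(p+2)).
Proof.
  assert (HI := beta_int p Hp).
  assert (pr : Riemann_integrable (beta_integrand 2 (p+1)) 0 1).
  { apply ex_RInt_Reals_0. eexists; eauto. }
  unfold beta.
  match goal with |- epsilon ?i ?P = _ =>
    assert (Hex : exists l, P l) by (exists (RiemannInt pr); exists pr; auto);
    destruct (epsilon_spec i P Hex) as [pr' Hpr'] end.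
  rewrite <- Hpr', <- RInt_Reals. apply is_RInt_unique; auto.
Qed.

Lemma key_num q (Hq : 1 < q) : let p := q / (q - 1) in
  Rpower 2 (1 + 1/q) <= 12 * Rpower (/ ((p+1)*(p+2))) (1/p).
Proof.
  intros p.
  assert (Hp1 : p - 1 = / (q - 1)) by (unfold p; field; lra).
  assert (Hqi : 0 < / (q-1)) by (apply Rinv_0_lt_compat; lra).
  assert (Hinvp : 1/p = 1 - 1/q) by (unfold p; field; lra).
  set (s := p - 1). assert (Hs : 0 <= s) by (unfold s; lra).
  pose (L := ln 3).
  assert (HL : 5/6 <= L).
  { unfold L. rewrite <- (ln_exp (5/6)). apply ln_le. apply exp_pos.
    apply Rle_trans with (exp 1). apply exp_le_mono; lra. apply exp_le_3. }
  assert (He : (1 + s*L/2) * (1 + s*L/2) <= exp (s*L)).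
  { replace (s*L) with (s*L/2 + s*L/2) at 3 by field. rewrite exp_plus.
    assert (H1 := exp_ineq1_le (s*L/2)).
    assert (0 <= s*L/2) by nra. apply Rmult_le_compat; lra. }
  assert (HX : (p+1)*(p+2) <= 2 * exp (p * L)).
  { replace (p*L) with (L + s*L) by (unfold s; ring). rewrite exp_plus.
    unfold L at 1. rewrite exp_ln by lra.
    replace p with (s+1) by (unfold s; ring).
    assert (L*L >= 25/36) by nra. nra. }
  assert (Hpos : 0 < (p+1)*(p+2)) by nra.
  assert (HlnX : ln ((p+1)*(p+2)) <= ln 2 + p * L).
  { rewrite <- (ln_exp (p*L)), <- ln_mult by (try apply exp_pos; lra).
    apply ln_le; auto. }
  unfold Rpower. rewrite ln_Rinv by auto.
  replace 12 with (exp (ln 12)) by (rewrite exp_ln; lra).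
  rewrite <- exp_plus. apply exp_le_mono.
  replace 12 with (2*2*3) by lra. rewrite (ln_mult (2*2) 3), (ln_mult 2 2) by lra. fold L.
  assert (Hq0 : 0 < /q) by (apply Rinv_0_lt_compat; lra).
  assert (Hqq : /q * q = 1) by (field; lra).
  assert (0 < 1/p) by (rewrite Hinvp; unfold Rdiv; nra).
  assert (H1p : 1/p * p = 1) by (field; unfold p; apply Rgt_not_eq; unfold Rdiv; apply Rmult_lt_0_compat; lra).
  assert (1/p * ln ((p+1)*(p+2)) <= 1/p * (ln 2 + p*L)) by (apply Rmult_le_compat_l; lra).
  rewrite Hinvp in *.
  replace ((1 - 1/q) * (ln 2 + p*L)) with ((1-1/q)*ln 2 + ((1-1/q)*p)*L) in H0 by ring.
  rewrite H1p in H0. nra.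
Qed.

Lemma quad_der a b s K c x :
  derivable_pt_lim (fun t => c + s*(t-a) + K*((t-a)*(t-b))) x (s + K*(2*x-a-b)).
Proof. apply is_derive_Reals. auto_derive; try ring; auto. Qed.

Lemma lin_der s K a b x :
  derivable_pt_lim (fun t => s + K*(2*t-a-b)) x (2*K).
Proof. apply is_derive_Reals. auto_derive; try ring; auto. Qed.

Lemma g_bound (f f' f'' : R -> R) a b M (Hab : a < b)
  (Hd1 : forall x, a <= x <= b -> derivable_pt_lim f x (f' x))
  (Hd2 : forall x, a <= x <= b -> derivable_pt_lim f' x (f'' x))
  (HM : forall x, a < x < b -> Rabs (f'' x) <= M) x (Hx : a <= x <= b) :
  Rabs (f x - (f a + (f b - f a)/(b-a)*(x-a))) <= M/2*((x-a)*(b-x)).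
Proof.
  destruct (Req_dec x a) as [->|Hxa].
  { replace (f a - (f a + (f b - f a) / (b - a) * (a - a))) with 0 by ring.
    rewrite Rabs_R0. replace (M / 2 * ((a - a) * (b - a))) with 0 by ring. lra. }
  destruct (Req_dec x b) as [->|Hxb].
  { replace (f b - (f a + (f b - f a) / (b - a) * (b - a))) with 0 by (field; lra).
    rewrite Rabs_R0. replace (M / 2 * ((b - a) * (b - b))) with 0 by ring. lra. }
  assert (Hx' : a < x < b) by lra.
  set (s := (f b - f a)/(b-a)).
  set (K := (f x - (f a + s*(x-a)))/((x-a)*(x-b))).
  pose (phi := fun t => f t - (f a + s*(t-a) + K*((t-a)*(t-b)))).
  pose (phi' := fun t => f' t - (s + K*(2*t-a-b))).
  pose (phi'' := fun t => f'' t - 2*K).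
  assert (D1 : forall t, a <= t <= b -> derivable_pt_lim phi t (phi' t)).
  { intros t Ht. apply derivable_pt_lim_minus; [apply Hd1; auto | apply quad_der]. }
  assert (D2 : forall t, a <= t <= b -> derivable_pt_lim phi' t (phi'' t)).
  { intros t Ht. apply derivable_pt_lim_minus; [apply Hd2; auto | apply lin_der]. }
  assert (Pa : phi a = 0) by (unfold phi; ring).
  assert (Pb : phi b = 0) by (unfold phi, s; field; lra).
  assert (Px : phi x = 0).
  { unfold phi, K. field. split; lra. }
  destruct (MVT_cor2 phi phi' a x) as [c1 [E1 H1]]; [lra| intros; apply D1; lra |].
  destruct (MVT_cor2 phi phi' x b) as [c2 [E2 H2]]; [lra| intros; apply D1; lra |].
  rewrite Pa, Px in E1. rewrite Pb, Px in E2.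
  assert (Z1 : phi' c1 = 0).
  { destruct (Rmult_integral _ _ (eq_sym (eq_trans (eq_sym (Rminus_diag 0)) E1))) ; lra. }
  assert (Z2 : phi' c2 = 0).
  { destruct (Rmult_integral _ _ (eq_sym (eq_trans (eq_sym (Rminus_diag 0)) E2))) ; lra. }
  destruct (MVT_cor2 phi' phi'' c1 c2) as [xi [E3 H3]]; [lra| intros; apply D2; lra |].
  rewrite Z1, Z2 in E3.
  assert (Z3 : phi'' xi = 0).
  { destruct (Rmult_integral _ _ (eq_sym (eq_trans (eq_sym (Rminus_diag 0)) E3))) ; lra. }
  unfold phi'' in Z3.
  assert (HK : Rabs K <= M/2).
  { replace K with (f'' xi / 2) by lra. unfold Rdiv. rewrite Rabs_mult.
    rewrite (Rabs_pos_eq (/2)) by lra. assert (Rabs (f'' xi) <= M) by (apply HM; lra). lra. }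
  replace (f x - (f a + s * (x - a))) with (- K * ((x-a)*(b-x))).
  2:{ unfold K. field. split; lra. }
  rewrite Rabs_mult, Rabs_Ropp, (Rabs_pos_eq ((x-a)*(b-x))) by nra.
  apply Rmult_le_compat_r; nra.
Qed.

Lemma Rabs_le_inv' z e : Rabs z <= e -> - e <= z <= e.
Proof. intros H. split.
  - assert (Rabs (-z) <= e) by (rewrite Rabs_Ropp; auto). assert (-z <= Rabs (-z)) by apply Rle_abs. lra.
  - assert (z <= Rabs z) by apply Rle_abs. lra. Qed.

Lemma poly_int a b c s e : a < b ->
  is_RInt (fun x => c + s*(x-a) + e/2*((x-a)*(b-x))) a b
    ((b-a)*c + s*(b-a)^2/2 + e*(b-a)^3/12).
Proof.
  intros Hab.
  pose (G := fun x => c*x + s*(x-a)^2/2 + e/2*((b-a)*(x-a)^2/2 - (x-a)^3/3)).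
  replace ((b-a)*c + s*(b-a)^2/2 + e*(b-a)^3/12) with (minus (G b) (G a)).
  2:{ change (@eq R (G b - G a) ((b-a)*c + s*(b-a)^2/2 + e*(b-a)^3/12)). unfold G. field. }
  apply (is_RInt_derive (V:=R_CompleteNormedModule) G).
  - intros x _. unfold G. auto_derive; auto. field.
  - intros x _. apply (ex_derive_continuous (K:=R_AbsRing) (V:=R_NormedModule)). auto_derive; auto.
Qed.

Lemma interior_sub I (HI : is_interval I) a b (Ha : int_pt I a) (Hb : int_pt I b)
  y : a <= y <= b -> int_pt I y.
Proof.
  intros Hy. destruct Ha as [ea [Hea Ha]]. destruct Hb as [eb [Heb Hb]].
  exists (Rmin ea eb). split. apply Rmin_pos; auto.
  intros z Hz. assert (Hm1 := Rmin_l ea eb). assert (Hm2 := Rmin_r ea eb).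
  apply Rabs_def2 in Hz.
  assert (IA : I a) by (apply Ha; rewrite Rminus_diag, Rabs_R0; auto).
  assert (IB : I b) by (apply Hb; rewrite Rminus_diag, Rabs_R0; auto).
  destruct (Rlt_le_dec z a).
  - apply Ha. rewrite Rabs_left by lra. lra.
  - destruct (Rlt_le_dec b z).
    + apply Hb. rewrite Rabs_pos_eq by lra. lra.
    + apply (HI a z b); auto.
Qed.

Theorem corollary2p3
  (I : R -> Prop) (HI : is_interval I) (HI0 : forall x, I x -> 0 <= x)
  (f f' f'' : R -> R)
  (Hf' : forall x, int_pt I x -> derivable_pt_lim f x (f' x))
  (Hf'' : forall x, int_pt I x -> derivable_pt_lim f' x (f'' x))
  (a b : R) (Ha : int_pt I a) (Hb : int_pt I b) (Hab : a < b)
  (q : R) (Hq : 1 < q)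
  (Hqc : quasi_convex_on (fun x => rpow (Rabs (f'' x)) q) a b)
  (M : R)
  (HM : is_lub (fun y => exists x, a < x < b /\ y = Rabs (f'' x)) M)
  (prf : Riemann_integrable f a b) :
  let p := q / (q - 1) in
  Rabs ((f a + f b) / 2 - / (b - a) * RiemannInt prf)
    <= (b - a) ^ 2 / rpow 2 (1 + 1 / q) * M * rpow (beta 2 (p + 1)) (1 / p).
Proof.
  intros p.
  assert (Hd1 : forall x, a <= x <= b -> derivable_pt_lim f x (f' x))
    by (intros x Hx; apply Hf'; apply (interior_sub I HI a b Ha Hb x Hx)).
  assert (Hd2 : forall x, a <= x <= b -> derivable_pt_lim f' x (f'' x))
    by (intros x Hx; apply Hf''; apply (interior_sub I HI a b Ha Hb x Hx)).
  assert (HMb : forall x, a < x < b -> Rabs (f'' x) <= M).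
  { intros x Hx. apply (proj1 HM). exists x; auto. }
  assert (HM0 : 0 <= M).
  { apply Rle_trans with (Rabs (f'' ((a+b)/2))). apply Rabs_pos. apply HMb; lra. }
  set (d := b - a). set (T := (f a + f b)/2). set (s := (f b - f a)/(b-a)).
  assert (Hd : 0 < d) by (unfold d; lra).
  assert (HA : - (M*d^3/12) <= RiemannInt prf - d*T <= M*d^3/12).
  { rewrite <- RInt_Reals.
    assert (Hex := ex_RInt_Reals_1 _ _ _ prf).
    assert (Hup := poly_int a b (f a) s M Hab).
    assert (Hlo := poly_int a b (f a) s (-M) Hab).
    assert (E1 : (b-a)*f a + s*(b-a)^2/2 = d*T) by (unfold d, T, s; field; lra).
    assert (Iup := is_RInt_unique _ _ _ _ Hup).
    assert (Ilo := is_RInt_unique _ _ _ _ Hlo).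
    assert (L1 : RInt f a b <= RInt (fun x => f a + s*(x-a) + M/2*((x-a)*(b-x))) a b).
    { apply RInt_le; auto; [lra | eexists; eauto |].
      intros x Hx. assert (H := g_bound f f' f'' a b M Hab Hd1 Hd2 HMb x ltac:(lra)).
      apply Rabs_le_inv' in H. fold s in H. lra. }
    assert (L2 : RInt (fun x => f a + s*(x-a) + -M/2*((x-a)*(b-x))) a b <= RInt f a b).
    { apply RInt_le; auto; [lra | eexists; eauto |].
      intros x Hx. assert (H := g_bound f f' f'' a b M Hab Hd1 Hd2 HMb x ltac:(lra)).
      apply Rabs_le_inv' in H. fold s in H. lra. }
    rewrite Iup in L1. rewrite Ilo in L2. fold d in L1, L2.
    rewrite <- E1. fold d. split; nra. }
  apply Rle_trans with (M * d^2/12).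
  { replace (T - / d * RiemannInt prf) with (/d * (d*T - RiemannInt prf)) by (field; lra).
    rewrite Rabs_mult, (Rabs_pos_eq (/d)) by (left; apply Rinv_0_lt_compat; auto).
    apply Rle_trans with (/d * (M*d^3/12)).
    - apply Rmult_le_compat_l. left; apply Rinv_0_lt_compat; auto.
      apply Rabs_le. lra.
    - right. field. lra. }
  assert (Hp : 0 < p).
  { unfold p, Rdiv. apply Rmult_lt_0_compat. lra. apply Rinv_0_lt_compat; lra. }
  rewrite beta_val by auto.
  assert (Hb0 : 0 < / ((p + 1) * (p + 2))) by (apply Rinv_0_lt_compat; nra).
  rewrite !rpow_pos_eq by lra.
  assert (HK := key_num q Hq). cbv zeta in HK. fold p in HK.
  set (P2 := Rpower 2 (1 + 1/q)) in *. set (B := Rpower (/ ((p+1)*(p+2))) (1/p)) in *.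
  assert (HP2 : 0 < P2) by apply Rpower_pos.
  assert (Hinv : P2 * / P2 = 1) by (field; lra).
  assert (Hiv : 0 < / P2) by (apply Rinv_0_lt_compat; auto).
  assert (HBP : 1/12 <= B * / P2).
  { apply Rmult_le_reg_l with P2; auto. rewrite (Rmult_comm B), <- Rmult_assoc, Hinv, Rmult_1_l. lra. }
  replace (d ^ 2 / P2 * M * B) with ((M * d^2) * (B * / P2)) by (field; lra).
  replace (M * d^2/12) with ((M*d^2) * (1/12)) by field.
  apply Rmult_le_compat_l. apply Rmult_le_pos; [auto| apply pow2_ge_0]. exact HBP.
Qed.
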